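(* Let $u,v,w,z,q,g,h,r\in\mathbb R$ and let $$F(y)=\begin{pmatrix}0&u&v\\ w&q&g+wy_2\\ z&h+uy_2&r+(v+z)y_2\end{pmatrix},\quad y\in\mathbb R^3,$$ and assume the symmetric part of $F$ is nondegenerate on the region considered. Then the torsion $H_{ijk}$ of $F$ vanishes identically, the Riemann tensor of the metric $G_{ij}$ vanishes identically, and every constant function $\Phi$ satisfies the one-loop vanishing $\beta$-function equations.
   Context: For a matrix-valued function $F_{ij}(y)$ on an open set of $\mathbb R^3$, set $G_{ij}=\tfrac12(F_{ij}+F_{ji})$ (metric, assumed nondegenerate, used to raise and lower indices), $B_{ij}=\tfrac12(F_{ij}-F_{ji})$, and $H_{ijk}=\partial_iB_{jk}+\partial_jB_{ki}+\partial_kB_{ij}$. Let $\nabla$ be the Levi-Civita connection of $G$, $R_{ij}$ its Ricci tensor and $R$ its scalar curvature. The one-loop vanishing $\beta$-function equations for a function $\Phi$ are: $0=R_{ij}-\nabla_i\nabla_j\Phi-\tfrac14H_{imn}H_j{}^{mn}$; $0=\nabla^k\Phi\,H_{kij}+\nabla^kH_{kij}$; $0=R-2\nabla_k\nabla^k\Phi-\nabla_k\Phi\nabla^k\Phi-\tfrac1{12}H_{kmn}H^{kmn}$. *)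

(* Defs.v *)
From HB Require Import structures.
From mathcomp Require Import all_boot all_order all_algebra.
From mathcomp Require Import all_classical all_reals all_analysis.
Import Order.TTheory GRing.Theory Num.Theory.
Import numFieldNormedType.Exports.
Local Open Scope ring_scope.

(* Points of R^3 are row vectors y : 'rV[R]_3; coordinates are indexed by
   'I_3 = {0,1,2}, so the paper's (1-indexed) y_1, y_2, y_3 are
   y 0 0, y 0 1, y 0 2. *)

Definition pd {R : realType} (i : 'I_3) (f : 'rV[R]_3 -> R) (y : 'rV[R]_3) : R :=
  derive f y (delta_mx 0 i).

Definition Gm {R : realType} (F : 'rV[R]_3 -> 'M[R]_3) (y : 'rV[R]_3) : 'M[R]_3 :=
  \matrix_(i, j) ((F y i j + F y j i) / 2).
Definition Bm {R : realType} (F : 'rV[R]_3 -> 'M[R]_3) (y : 'rV[R]_3) : 'M[R]_3 :=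
  \matrix_(i, j) ((F y i j - F y j i) / 2).
Definition Ginv {R : realType} (F : 'rV[R]_3 -> 'M[R]_3) (y : 'rV[R]_3) : 'M[R]_3 :=
  invmx (Gm F y).

Definition Htor {R : realType} (F : 'rV[R]_3 -> 'M[R]_3) (i j k : 'I_3)
  (y : 'rV[R]_3) : R :=
  pd i (fun x => Bm F x j k) y + pd j (fun x => Bm F x k i) y
  + pd k (fun x => Bm F x i j) y.

Definition Gam {R : realType} (F : 'rV[R]_3 -> 'M[R]_3) (l i j : 'I_3)
  (y : 'rV[R]_3) : R :=
  \sum_(m < 3) Ginv F y l m *
    (pd i (fun x => Gm F x m j) y + pd j (fun x => Gm F x m i) y
     - pd m (fun x => Gm F x i j) y) / 2.

Definition Riem {R : realType} (F : 'rV[R]_3 -> 'M[R]_3) (l i j k : 'I_3)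
  (y : 'rV[R]_3) : R :=
  pd i (Gam F l j k) y - pd j (Gam F l i k) y
  + \sum_(m < 3) (Gam F l i m y * Gam F m j k y - Gam F l j m y * Gam F m i k y).

Definition Ric {R : realType} (F : 'rV[R]_3 -> 'M[R]_3) (j k : 'I_3)
  (y : 'rV[R]_3) : R :=
  \sum_(i < 3) Riem F i i j k y.
Definition Scal {R : realType} (F : 'rV[R]_3 -> 'M[R]_3) (y : 'rV[R]_3) : R :=
  \sum_(j < 3) \sum_(k < 3) Ginv F y j k * Ric F j k y.

Definition hessPhi {R : realType} (F : 'rV[R]_3 -> 'M[R]_3) (Phi : 'rV[R]_3 -> R)
  (i j : 'I_3) (y : 'rV[R]_3) : R :=
  pd i (pd j Phi) y - \sum_(k < 3) Gam F k i j y * pd k Phi y.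

Definition gradUp {R : realType} (F : 'rV[R]_3 -> 'M[R]_3) (Phi : 'rV[R]_3 -> R)
  (k : 'I_3) (y : 'rV[R]_3) : R :=
  \sum_(a < 3) Ginv F y k a * pd a Phi y.

Definition covH {R : realType} (F : 'rV[R]_3 -> 'M[R]_3) (a k i j : 'I_3)
  (y : 'rV[R]_3) : R :=
  pd a (Htor F k i j) y
  - \sum_(b < 3) (Gam F b a k y * Htor F b i j y + Gam F b a i y * Htor F k b j y
                  + Gam F b a j y * Htor F k i b y).

Definition HH {R : realType} (F : 'rV[R]_3 -> 'M[R]_3) (i j : 'I_3)
  (y : 'rV[R]_3) : R :=
  \sum_(m < 3) \sum_(n < 3) \sum_(a < 3) \sum_(b < 3)
    Htor F i m n y * Ginv F y m a * Ginv F y n b * Htor F j a b y.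

Definition Hsq {R : realType} (F : 'rV[R]_3 -> 'M[R]_3) (y : 'rV[R]_3) : R :=
  \sum_(k < 3) \sum_(m < 3) \sum_(n < 3) \sum_(a < 3) \sum_(b < 3) \sum_(c < 3)
    Htor F k m n y * Ginv F y k a * Ginv F y m b * Ginv F y n c * Htor F a b c y.

Definition beta_eqs {R : realType} (F : 'rV[R]_3 -> 'M[R]_3) (Phi : 'rV[R]_3 -> R)
  (y : 'rV[R]_3) : Prop :=
  (forall i j : 'I_3,
      Ric F i j y - hessPhi F Phi i j y - HH F i j y / 4 = 0)
  /\ (forall i j : 'I_3,
      \sum_(k < 3) gradUp F Phi k y * Htor F k i j y
      + \sum_(k < 3) \sum_(a < 3) Ginv F y k a * covH F a k i j y = 0)
  /\ (Scal F y
      - 2 * (\sum_(k < 3) \sum_(a < 3) Ginv F y k a * hessPhi F Phi k a y)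
      - \sum_(k < 3) pd k Phi y * gradUp F Phi k y
      - Hsq F y / 12 = 0).

Definition Fex {R : realType} (u v w z q g h r : R) (y : 'rV[R]_3) : 'M[R]_3 :=
  let y2 := y 0 1 in
  \matrix_(i < 3, j < 3)
    nth 0 (nth [::] [:: [:: 0; u; v];
                       [:: w; q; g + w * y2];
                       [:: z; h + u * y2; r + (v + z) * y2]] i) j.

(* Main.v *)
Require Import Defs.
From HB Require Import structures.
From mathcomp Require Import all_boot all_order all_algebra.
From mathcomp Require Import all_classical all_reals all_analysis.
From mathcomp Require Import ring lra.
Import Order.TTheory GRing.Theory Num.Theory.
Import numFieldNormedType.Exports.
Local Open Scope ring_scope.
Local Open Scope classical_set_scope.

Lemma pd_aff {R : realType} (f : 'rV[R]_3 -> R) (al be : R) (i : 'I_3) y :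
  (forall x, f x = al + be * x 0 1) ->
  pd i f y = (if val i == 1%N then be else 0).
Proof.
move=> hf; rewrite /pd /derive.
apply: cvg_lim => //.
apply: cvg_trans (cvg_cst (if val i == 1%N then be else 0)).
apply: near_eq_cvg; near=> t.
have t0 : t != 0 by near: t; exact: nbhs_dnbhs_neq.
rewrite /= !hf !mxE.
case: i => [[|[|[|i]]] Hi] //=; rewrite /GRing.scale /=; field; exact t0.
Unshelve. all: try by end_near.
all: exact: dnbhs_filter.
Qed.
Ltac c3 i := case: i => [[|[|[|?]]] ?] //=.
Ltac fld := field; try (apply/eqP; lra); try done.

Definition aa {R : realType} (u w : R) := (u + w) / 2.

Definition Gc {R : realType} (u v w z q g h r : R) (i j : 'I_3) : R :=
  match val i, val j with
  | 0%N, 1%N | 1%N, 0%N => (u + w) / 2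
  | 0%N, 2%N | 2%N, 0%N => (v + z) / 2
  | 1%N, 1%N => q
  | 1%N, 2%N | 2%N, 1%N => (g + h) / 2
  | 2%N, 2%N => r
  | _, _ => 0 end.
Definition Gl {R : realType} (u v w z : R) (i j : 'I_3) : R :=
  match val i, val j with
  | 1%N, 2%N | 2%N, 1%N => (u + w) / 2
  | 2%N, 2%N => v + z
  | _, _ => 0 end.
Definition Bl {R : realType} (u w : R) (i j : 'I_3) : R :=
  match val i, val j with
  | 1%N, 2%N => (w - u) / 2
  | 2%N, 1%N => (u - w) / 2
  | _, _ => 0 end.
Definition Bc {R : realType} (u v w z g h : R) (i j : 'I_3) : R :=
  match val i, val j with
  | 0%N, 1%N => (u - w) / 2 | 1%N, 0%N => (w - u) / 2
  | 0%N, 2%N => (v - z) / 2 | 2%N, 0%N => (z - v) / 2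
  | 1%N, 2%N => (g - h) / 2 | 2%N, 1%N => (h - g) / 2
  | _, _ => 0 end.

Lemma Gm_aff {R : realType} (u v w z q g h r : R) x i j :
  Gm (Fex u v w z q g h r) x i j = Gc u v w z q g h r i j + Gl u v w z i j * x 0 1.
Proof. rewrite /Gm /Fex /Gc /Gl !mxE; c3 i; c3 j; fld. Qed.

Lemma Bm_aff {R : realType} (u v w z q g h r : R) x i j :
  Bm (Fex u v w z q g h r) x i j = Bc u v w z g h i j + Bl u w i j * x 0 1.
Proof. rewrite /Bm /Fex /Bc /Bl !mxE; c3 i; c3 j; fld. Qed.

Lemma pd_Bm {R : realType} (u v w z q g h r : R) k i j y :
  pd k (fun x => Bm (Fex u v w z q g h r) x i j) y = if val k == 1%N then Bl u w i j else 0.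
Proof. exact: pd_aff (fun x => Bm_aff u v w z q g h r x i j). Qed.

Lemma pd_Gm {R : realType} (u v w z q g h r : R) k i j y :
  pd k (fun x => Gm (Fex u v w z q g h r) x i j) y = if val k == 1%N then Gl u v w z i j else 0.
Proof. exact: pd_aff (fun x => Gm_aff u v w z q g h r x i j). Qed.

Lemma Htor0 {R : realType} (u v w z q g h r : R) i j k x :
  Htor (Fex u v w z q g h r) i j k x = 0.
Proof.
rewrite /Htor !pd_Bm.
rewrite /Bl; c3 i; c3 j; c3 k; fld.
Qed.

Definition Dd {R : realType} (u v w z q g h r : R) : R :=
  let a := (u + w) / 2 in let b := v + z in let e0 := (g + h) / 2 in
  - a ^+ 2 * r + a * b * e0 - q * b ^+ 2 / 4.

Definition Ae {R : realType} (u v w z q g h r : R) (t : R) (l m : 'I_3) : R :=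
  let a := (u + w) / 2 in let b := v + z in let e := (g + h) / 2 + a * t in
  let f := r + b * t in
  match val l, val m with
  | 0%N, 0%N => q * f - e ^+ 2
  | 0%N, 1%N | 1%N, 0%N => e * b / 2 - a * f
  | 0%N, 2%N | 2%N, 0%N => a * e - q * b / 2
  | 1%N, 1%N => - b ^+ 2 / 4
  | 1%N, 2%N | 2%N, 1%N => a * b / 2
  | 2%N, 2%N => - a ^+ 2
  | _, _ => 0 end.

Definition Kmx {R : realType} (u v w z q g h r : R) (t : R) : 'M[R]_3 :=
  \matrix_(l, m) (Ae u v w z q g h r t l m / Dd u v w z q g h r).

Lemma GK {R : realType} (u v w z q g h r : R) x :
  Dd u v w z q g h r != 0 ->
  Gm (Fex u v w z q g h r) x *m Kmx u v w z q g h r (x 0 1) = 1%:M.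
Proof.
move=> hD; apply/matrixP => i j.
rewrite !mxE !big_ord_recr big_ord0 /= !mxE /Ae.
move: hD; rewrite /Dd => hD.
c3 i; c3 j; fld.
Qed.

Lemma Ginv_eq {R : realType} (u v w z q g h r : R) x :
  Dd u v w z q g h r != 0 ->
  Ginv (Fex u v w z q g h r) x = Kmx u v w z q g h r (x 0 1).
Proof.
move=> hD; have hGK := GK u v w z q g h r x hD.
have [hG _] := mulmx1_unit hGK.
by rewrite /Ginv -[invmx _]mulmx1 -hGK mulmxA mulVmx ?mul1mx.
Qed.

Lemma Dd_ne0 {R : realType} (u v w z q g h r : R) y :
  \det (Gm (Fex u v w z q g h r) y) != 0 -> Dd u v w z q g h r != 0.
Proof.
move=> hdet; have hG : Gm (Fex u v w z q g h r) y \in unitmx by rewrite unitmxE unitfE.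
have key : forall M : 'M[R]_3, Gm (Fex u v w z q g h r) y *m M = 0 -> M = 0.
  by move=> M hM; rewrite -[M]mul1mx -(mulVmx hG) -mulmxA hM mulmx0.
have keyr : forall M : 'M[R]_3, M *m Gm (Fex u v w z q g h r) y = 0 -> M = 0.
  by move=> M hM; rewrite -[M]mulmx1 -(mulmxV hG) mulmxA hM mul0mx.
apply/eqP => hD0.
have A0 : \matrix_(l, m) Ae u v w z q g h r (y 0 1) l m = 0 :> 'M[R]_3.
  apply: key; apply/matrixP => i j; rewrite !mxE.
  apply: (@eq_trans _ _ (Dd u v w z q g h r * (i == j)%:R)); last by rewrite hD0 mul0r.
  rewrite !big_ord_recr !big_ord0 /= !mxE /Ae /Dd.
  c3 i; c3 j; fld.
have a0 : (u + w) / 2 = 0.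
  move/matrixP: A0 => /(_ 2 2); rewrite !mxE /Ae /= => h0.
  have : ((u + w) / 2) ^+ 2 = 0 by lra.
  by move/eqP; rewrite sqrf_eq0 => /eqP.
have b0 : v + z = 0.
  move/matrixP: A0 => /(_ 1 1); rewrite !mxE /Ae /= => h0.
  have : (v + z) ^+ 2 = 0 by lra.
  by move/eqP; rewrite sqrf_eq0 => /eqP.
have D0 : delta_mx 0 0 = 0 :> 'M[R]_3.
  apply: keyr; apply/matrixP => i j; rewrite !mxE.
  rewrite !big_ord_recr !big_ord0 /= !mxE.
  move: a0 b0; c3 i; c3 j; move=> a0 b0; lra.
by move/matrixP: D0 => /(_ 0 0); rewrite !mxE /= => /eqP; rewrite oner_eq0.
Qed.

Definition DD {R : realType} (a b e q r : R) : R := - a ^+ 2 * r + a * b * e - q * b ^+ 2 / 4.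
Definition N1 {R : realType} (a b e q r t : R) (l : 'I_3) : R :=
  match val l with 0%N => (e + a * t) * b / 2 - a * (r + b * t) | 1%N => - b ^+ 2 / 4
  | 2%N => a * b / 2 | _ => 0 end.
Definition N2 {R : realType} (a b e q r t : R) (l : 'I_3) : R :=
  match val l with 0%N => a * (e + a * t) - q * b / 2 | 1%N => a * b / 2
  | 2%N => - a ^+ 2 | _ => 0 end.
Definition dN1 {R : realType} (a b : R) (l : 'I_3) : R :=
  match val l with 0%N => - (a * b / 2) | _ => 0 end.
Definition dN2 {R : realType} (a b : R) (l : 'I_3) : R :=
  match val l with 0%N => a ^+ 2 | _ => 0 end.
Definition Gs {R : realType} (a b e q r t : R) (l i j : 'I_3) : R :=
  match val i, val j with
  | 1%N, 1%N => a * N2 a b e q r t l / DD a b e q r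
  | 1%N, 2%N | 2%N, 1%N => b / 2 * N2 a b e q r t l / DD a b e q r
  | 2%N, 2%N => - (b / 2) * N1 a b e q r t l / DD a b e q r
  | _, _ => 0 end.
Definition dGs {R : realType} (a b e q r : R) (l i j : 'I_3) : R :=
  match val i, val j with
  | 1%N, 1%N => a * dN2 a b l / DD a b e q r
  | 1%N, 2%N | 2%N, 1%N => b / 2 * dN2 a b l / DD a b e q r
  | 2%N, 2%N => - (b / 2) * dN1 a b l / DD a b e q r
  | _, _ => 0 end.

Lemma core {R : realType} (a b e q r t : R) l i j k :
  DD a b e q r != 0 ->
  (if val i == 1%N then dGs a b e q r l j k else 0)
  - (if val j == 1%N then dGs a b e q r l i k else 0)
  + \sum_(m < 3) (Gs a b e q r t l i m * Gs a b e q r t m j k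
                  - Gs a b e q r t l j m * Gs a b e q r t m i k) = 0.
Proof.
move=> hD; rewrite !big_ord_recr !big_ord0 /=.
rewrite /Gs /dGs /N1 /N2 /dN1 /dN2.
move: hD; rewrite /DD => hD.
c3 l; c3 i; c3 j; c3 k; fld.
Qed.

Lemma Gs_aff {R : realType} (a b e q r t : R) l i j :
  DD a b e q r != 0 ->
  Gs a b e q r t l i j = Gs a b e q r 0 l i j + dGs a b e q r l i j * t.
Proof.
move=> hD; rewrite /Gs /dGs /N1 /N2 /dN1 /dN2.
move: hD; rewrite /DD => hD.
c3 l; c3 i; c3 j; fld.
Qed.

Lemma Gam_eq {R : realType} (u v w z q g h r : R) l i j x :
  Dd u v w z q g h r != 0 ->
  Gam (Fex u v w z q g h r) l i j x = Gs ((u + w) / 2) (v + z) ((g + h) / 2) q r (x 0 1) l i j.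
Proof.
move=> hD.
rewrite /Gam !big_ord_recr !big_ord0 /= Ginv_eq // !pd_Gm !mxE /Ae /Gs /N1 /N2 /Gl /DD.
move: hD; rewrite /Dd /= => hD.
c3 l; c3 i; c3 j; fld.
Qed.

Lemma pd_Gam {R : realType} (u v w z q g h r : R) k l i j y :
  Dd u v w z q g h r != 0 ->
  pd k (Gam (Fex u v w z q g h r) l i j) y =
  if val k == 1%N then dGs ((u + w) / 2) (v + z) ((g + h) / 2) q r l i j else 0.
Proof.
move=> hD; apply: pd_aff => x.
by rewrite Gam_eq // Gs_aff.
Qed.

Lemma Riem0 {R : realType} (u v w z q g h r : R) l i j k y :
  Dd u v w z q g h r != 0 ->
  Riem (Fex u v w z q g h r) l i j k y = 0.
Proof.
move=> hD.
rewrite /Riem !pd_Gam //.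
under eq_bigr => m _ do rewrite !Gam_eq //.
exact: core.
Qed.

Lemma pd_cst {R : realType} (c : R) i y : pd i (fun _ : 'rV[R]_3 => c) y = 0.
Proof. by rewrite (@pd_aff _ _ c 0) ?if_same // => x; rewrite mul0r addr0. Qed.

Theorem mainTheorem8 (R : realType) (u v w z q g h r : R) (U : set 'rV[R]_3) :
  open U ->
  (forall y, U y -> \det (Gm (Fex u v w z q g h r) y) != 0) ->
  forall y, U y ->
    (forall i j k : 'I_3, Htor (Fex u v w z q g h r) i j k y = 0)
    /\ (forall l i j k : 'I_3, Riem (Fex u v w z q g h r) l i j k y = 0)
    /\ (forall c : R, beta_eqs (Fex u v w z q g h r) (fun _ => c) y).
Proof.
move=> _ hdet y Uy; have hD := Dd_ne0 u v w z q g h r y (hdet y Uy).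
set F := Fex u v w z q g h r.
have H0 : forall i j k x, Htor F i j k x = 0 by move=> *; exact: Htor0.
have R0 : forall l i j k x, Riem F l i j k x = 0 by move=> *; exact: Riem0.
split; first by move=> *; exact: H0.
split; first by move=> *; exact: R0.
move=> c.
have Ric0 : forall i j, Ric F i j y = 0.
  by move=> i j; apply: big1 => k _; exact: R0.
have hess0 : forall i j, hessPhi F (fun _ => c) i j y = 0.
  move=> i j; rewrite /hessPhi (@pd_aff _ _ 0 0); last by move=> x; rewrite pd_cst mul0r addr0.
  rewrite if_same big1 ?subr0 // => k _; by rewrite pd_cst mulr0.
have HH0 : forall i j, HH F i j y = 0.
  move=> i j; apply: big1 => m _; apply: big1 => n _; apply: big1 => a _; apply: big1 => b _.
  by rewrite H0 !mul0r.
have Hsq0 : Hsq F y = 0.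
  apply: big1 => k _; apply: big1 => m _; apply: big1 => n _; apply: big1 => a _.
  apply: big1 => b _; apply: big1 => d _; by rewrite H0 !mul0r.
have covH0 : forall a k i j, covH F a k i j y = 0.
  move=> a k i j; rewrite /covH (@pd_aff _ _ 0 0); last by move=> x; rewrite H0 mul0r addr0.
  rewrite if_same big1 ?subr0 // => b _; by rewrite !H0 !mulr0 !addr0.
split.
  by move=> i j; rewrite Ric0 hess0 HH0 mul0r !subr0.
split.
  move=> i j; rewrite !big1 ?addr0 // => k _.
    by apply: big1 => a _; rewrite covH0 mulr0.
  by rewrite H0 mulr0.
rewrite /Scal !big1 ?Hsq0; first by rewrite mul0r !subr0 mulr0 subr0.
- by move=> k _; rewrite pd_cst mul0r.
- by move=> k _; apply: big1 => a _; rewrite hess0 mulr0.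
- by move=> j _; apply: big1 => k _; rewrite Ric0 mulr0.
Qed.
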